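(* Let $k\ge1$ be an integer, $p$ a prime, $\theta>0$, and $\mathbf u=(u_1,\dots,u_{2k})\in\mathbb C^{2k}$ with $\Re(u_i)\ge\theta$ for all $i$. Then $$B_{p,2k}(\mathbf u;0)=\prod_{1\le i\le j\le2k}\Big(1-\frac1{p^{u_i+u_j}}\Big)^{-1}C_{p,2k}(\mathbf u),$$ where $$C_{p,2k}(\mathbf u)=\prod_{1\le i<j\le2k}\Big(1-\frac1{p^{u_i+u_j}}\Big)\sum_{\substack{A\subseteq\{1,\dots,2k\}\\|A|\text{ even}}}\prod_{i\in A}\frac1{p^{u_i}}=1+O\Big(\frac1{p^{4\theta}}\Big).$$
   Context: For a prime $p$, an integer $k\ge1$, $\mathbf u\in\mathbb C^k$ and $a\in\{0,1\}$, $$B_{p,k}(\mathbf u;a)=\sum_{\substack{n_1,\dots,n_k\ge0\\ n_1+\dots+n_k\equiv a\ (\mathrm{mod}\ 2)}}\frac1{p^{n_1u_1+\dots+n_ku_k}}.$$ *)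

(* Defs.v *)
From HB Require Import structures.
From mathcomp Require Import all_boot all_order all_algebra.
From mathcomp Require Import complex.
From mathcomp Require Import all_classical all_reals all_analysis.
Set Implicit Arguments.
Unset Strict Implicit.
Unset Printing Implicit Defensive.
Import Order.TTheory GRing.Theory Num.Theory.
Import numFieldTopology.Exports numFieldNormedType.Exports.
Local Open Scope ring_scope.

Definition ppow {R : realType} (p : nat) (s : R[i]) : R[i] :=
  let L := ln (p%:R : R) in
  Complex (expR (complex.Re s * L) * cos (complex.Im s * L))
          (expR (complex.Re s * L) * sin (complex.Im s * L)).

(** Partial sums of B_{p,k}(u;a) over the box 0 <= n_i < N. *)
Definition B_partial {R : realType} (p k : nat) (u : 'I_k -> R[i]) (a N : nat)
  : R[i] :=
  \sum_(n : {ffun 'I_k -> 'I_N} | ((\sum_(i < k) (n i : nat)) %% 2 == a)%N)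
     (ppow p (\sum_(i < k) (n i : nat)%:R * u i))^-1.

Definition C_factor {R : realType} (p k : nat) (u : 'I_(2 * k) -> R[i]) : R[i] :=
  (\prod_(i < 2 * k) \prod_(j < 2 * k | (i < j)%N) (1 - (ppow p (u i + u j))^-1))
  * \sum_(A : {set 'I_(2 * k)} | ~~ odd #|A|) \prod_(i in A) (ppow p (u i))^-1.

(** Topology / normed structure on R[i] (from its numClosedFieldType norm). *)
HB.instance Definition _ (R : realType) := PseudoPointedMetric.copy R[i] (R[i])^o.

(* Main.v *)
Require Import Defs.
From HB Require Import structures.
From mathcomp Require Import all_boot all_order all_algebra.
From mathcomp Require Import complex.
From mathcomp Require Import all_classical all_reals all_analysis.
From mathcomp Require Import ring lra zify.
Import Order.TTheory GRing.Theory Num.Theory.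
Import numFieldTopology.Exports numFieldNormedType.Exports.
Local Open Scope classical_set_scope.
Local Open Scope ring_scope.
Local Open Scope complex_scope.
Section S0.
Context {R : realType}.
Implicit Types (a b s : R[i]).

Lemma ppowD p a b : ppow p (a + b) = ppow p a * ppow p b.
Proof.
case: a => ra ia; case: b => rb ib; rewrite /ppow /=.
rewrite !mulrDl expRD cosD sinD.
apply/eqP; rewrite eq_complex /=; apply/andP; split; apply/eqP; ring.
Qed.

Lemma ppow0 p : ppow p (0 : R[i]) = 1.
Proof. by rewrite /ppow /= !mul0r expR0 cos0 sin0 !mul1r. Qed.

Lemma ppowMn p n s : ppow p (n%:R * s) = ppow p s ^+ n.
Proof.
elim: n => [|n IH]; first by rewrite mul0r ppow0 expr0.
by rewrite -natr1 mulrDl mul1r ppowD IH exprSr.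
Qed.

Lemma ppow_sum p k (f : 'I_k -> R[i]) :
  ppow p (\sum_(i < k) f i) = \prod_(i < k) ppow p (f i).
Proof. exact: (big_morph _ (ppowD p) (ppow0 p)). Qed.

Definition nc (z : R[i]) : R := complex.Re `|z|.

Lemma ncE z : `|z| = (nc z)%:C.
Proof. by rewrite /nc normc_def. Qed.

Lemma nc_ge0 z : 0 <= nc z.
Proof. by have := normr_ge0 z; rewrite ncE lecE /= => /andP[]. Qed.

Lemma ncM z w : nc (z * w) = nc z * nc w.
Proof. by apply: complexI; rewrite -ncE normrM !ncE rmorphM. Qed.

Lemma ncD z w : nc (z + w) <= nc z + nc w.
Proof. by rewrite -lecR rmorphD /= -!ncE ler_normD. Qed.

Lemma ncN z : nc (- z) = nc z.
Proof. by rewrite /nc normrN. Qed.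

Lemma nc1 : nc 1 = 1.
Proof. by rewrite /nc normr1. Qed.

Lemma ncV z : nc (z^-1) = (nc z)^-1.
Proof. by apply: complexI; rewrite -ncE normfV ncE fmorphV. Qed.

Lemma ncX z n : nc (z ^+ n) = nc z ^+ n.
Proof. by apply: complexI; rewrite -ncE normrX ncE rmorphXn. Qed.

Lemma nc_prod (I : Type) (r : seq I) (P : pred I) (F : I -> R[i]) :
  nc (\prod_(i <- r | P i) F i) = \prod_(i <- r | P i) nc (F i).
Proof. exact: (big_morph _ ncM nc1). Qed.

Lemma nc_sum (I : Type) (r : seq I) (P : pred I) (F : I -> R[i]) :
  nc (\sum_(i <- r | P i) F i) <= \sum_(i <- r | P i) nc (F i).
Proof.
elim/big_rec2: _ => [|i y z _ Hz]; first by rewrite /nc normr0.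
by apply: le_trans (ncD _ _) _; rewrite lerD2l.
Qed.

Lemma nc_eq0 z : (nc z == 0) = (z == 0).
Proof. by rewrite -[RHS]normr_eq0 ncE eq_complex /= eqxx andbT. Qed.

Lemma nc_ppow p s : nc (ppow p s) = expR (complex.Re s * ln (p%:R : R)).
Proof.
rewrite /nc normc_def /ppow /= !exprMn -mulrDr cos2Dsin2 mulr1.
by rewrite sqrtr_sqr ger0_norm // expR_ge0.
Qed.

End S0.

Section S1.
Context {R : realType}.
Implicit Types (a b s : R[i]).
Lemma cvgX0 (y : R[i]) : nc y < 1 ->
  (fun N => y ^+ N : R[i]^o) n @[n --> \oo] --> (0 : R[i]^o).
Proof.
move=> hy; apply/cvgr0Pnorm_lt => -[a b].
rewrite ltcE /= => /andP[/eqP -> a0].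
have hz : `|nc y| < 1 by rewrite ger0_norm // nc_ge0.
have H := cvgr0_norm_lt _ (cvg_expr hz) _ a0.
near=> n.
have : `|nc y ^+ n| < a by near: n; exact: H.
rewrite ger0_norm ?exprn_ge0 ?nc_ge0 // => h.
by rewrite ncE ncX -complexr0 ltcR.
Unshelve. all: by end_near.
Qed.


Lemma cvg_geom (y : R[i]) : nc y < 1 ->
  (fun N => \sum_(m < N) y ^+ m : R[i]^o) n @[n --> \oo] --> ((1 - y)^-1 : R[i]^o).
Proof.
move=> hy.
have y1 : 1 - y != 0.
  rewrite subr_eq0; apply/eqP => y1; move: hy; rewrite -y1 nc1 ltxx //.
have E : (fun N => \sum_(m < N) y ^+ m : R[i]^o) = (fun N => (1 - y ^+ N) * (1 - y)^-1).
  apply: funext => N; have := subrXX 1 y N; rewrite expr1n => ->.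
  rewrite mulrC mulrA mulVf // mul1r; apply: eq_bigr => i _; by rewrite expr1n mul1r.
rewrite E.
have h1 : ((fun=> 1 : R[i]^o) - (fun N => y ^+ N : R[i]^o)) n @[n --> \oo] --> (1 - 0 : R[i]^o).
  by apply: cvgB; [exact: cvg_cst | exact: cvgX0].
have h2 : (fun N => 1 - y ^+ N : R[i]^o) n @[n --> \oo] --> (1 - 0 : R[i]^o) := h1.
have h3 : (fun N => (1 - y ^+ N) * (1 - y)^-1 : R[i]^o) n @[n --> \oo] --> ((1 - 0) * (1 - y)^-1 : R[i]^o).
  exact: cvgMr_tmp.
rewrite subr0 mul1r in h3.
exact: h3.
Qed.
End S1.

Section S2.
Context {R : realType}.
Implicit Types (a b s z w : R[i]).
Lemma cvg_bigprod (I : Type) (r : seq I) (f : I -> nat -> R[i]^o) (l : I -> R[i]^o) :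
  (forall i, f i n @[n --> \oo] --> l i) ->
  (\prod_(i <- r) f i n : R[i]^o) @[n --> \oo] --> (\prod_(i <- r) l i : R[i]^o).
Proof.
move=> hf; elim: r => [|a r IH].
  have -> : (fun n => \prod_(i <- [::]) f i n : R[i]^o) = (fun=> 1).
    by apply: funext => n; rewrite big_nil.
  rewrite big_nil; exact: cvg_cst.
have -> : (fun n => \prod_(i <- a :: r) f i n : R[i]^o) =
          (fun n => f a n * \prod_(i <- r) f i n).
  by apply: funext => n; rewrite big_cons.
rewrite big_cons.
have h : ((fun n => f a n) \* (fun n => \prod_(i <- r) f i n)) n @[n --> \oo] -->
         (l a * \prod_(i <- r) l i : R[i]^o).
  by apply: cvgM; [exact: hf | exact: IH].
exact: h.
Qed.

Lemma two_neq0 : (2 : R[i]) != 0.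
Proof. by rewrite pnatr_eq0. Qed.

Lemma even_split (I : finType) (w : I -> nat) (F : I -> R[i]) :
  \sum_(j | ~~ odd (w j)) F j = 2^-1 * (\sum_j F j + \sum_j (-1) ^+ (w j) * F j).
Proof.
rewrite -big_split /= big_mkcond mulr_sumr; apply: eq_bigr => j _.
rewrite -signr_odd; case: (odd (w j)) => /=.
  by rewrite expr1 mulN1r subrr mulr0.
by rewrite expr0 mul1r; field.
Qed.

Lemma B_partial_eq p k (u : 'I_k -> R[i]) N :
  B_partial p u 0 N = 2^-1 * (\prod_i \sum_(m < N) ((ppow p (u i))^-1)^+m
                            + \prod_i \sum_(m < N) (- (ppow p (u i))^-1)^+m).
Proof.
rewrite /B_partial.
rewrite (eq_bigl (fun n : {ffun 'I_k -> 'I_N} => ~~ odd (\sum_i (n i : nat))));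
  last by move=> n; rewrite modn2; case: odd.
rewrite even_split !bigA_distr_bigA /=; congr (_ * (_ + _)); apply: eq_bigr => n _.
  by rewrite ppow_sum -prodfV; apply: eq_bigr => i _; rewrite ppowMn exprVn.
under [RHS]eq_bigr do rewrite exprNn.
rewrite big_split /= prodrXr; congr (_ * _).
by rewrite ppow_sum -prodfV; apply: eq_bigr => i _; rewrite ppowMn exprVn.
Qed.

Lemma one_sub_neq0 z : nc z < 1 -> 1 - z != 0.
Proof. by move=> h; rewrite subr_eq0; apply/eqP => e; move: h; rewrite -e (@nc1 R) ltxx. Qed.

Lemma one_add_neq0 z : nc z < 1 -> 1 + z != 0.
Proof. by move=> h; rewrite -[z]opprK one_sub_neq0 // ncN. Qed.

Lemma ncM_lt1 z w : nc z < 1 -> nc w < 1 -> nc (z * w) < 1.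
Proof.
move=> hz hw; rewrite ncM; have := nc_ge0 z; have := nc_ge0 w.
nra.
Qed.

Lemma step_a n (x : 'I_n -> R[i]) : (forall i, nc (x i) < 1) ->
  (\prod_(i < n) \prod_(j < n | (i <= j)%N) (1 - x i * x j)^-1) *
    (\prod_(i < n) \prod_(j < n | (i < j)%N) (1 - x i * x j)) = \prod_i (1 - x i * x i)^-1.
Proof.
move=> hx; rewrite -big_split; apply: eq_bigr => i _ /=.
rewrite (bigD1 i) //= -mulrA -[RHS]mulr1; congr (_ * _).
have -> : \prod_(j < n | (i <= j)%N && (j != i)) (1 - x i * x j)^-1 =
          \prod_(j < n | (i < j)%N) (1 - x i * x j)^-1.
  by apply: eq_bigl => j; rewrite ltn_neqAle andbC eq_sym.
rewrite prodfV mulVf //; apply/prodf_neq0 => j _; apply: one_sub_neq0.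
exact: ncM_lt1.
Qed.

Lemma step_b n (x : 'I_n -> R[i]) :
  \sum_(A : {set 'I_n} | ~~ odd #|A|) \prod_(i in A) x i =
  2^-1 * (\prod_i (x i + 1) + \prod_i (- x i + 1)).
Proof.
rewrite even_split !bigA_distr; congr (_ * (_ + _)); apply: eq_bigr => A _.
  by rewrite big_mkcond.
by rewrite -prodrN big_mkcond.
Qed.

Lemma limit_eq n (x : 'I_n -> R[i]) : (forall i, nc (x i) < 1) ->
  2^-1 * (\prod_i (1 - x i)^-1 + \prod_i (1 - - x i)^-1) =
  (\prod_(i < n) \prod_(j < n | (i <= j)%N) (1 - x i * x j)^-1) *
  ((\prod_(i < n) \prod_(j < n | (i < j)%N) (1 - x i * x j)) *
   \sum_(A : {set 'I_n} | ~~ odd #|A|) \prod_(i in A) x i).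
Proof.
move=> hx; rewrite mulrA step_a // step_b mulrCA [X in _ = _ * X]mulrDr; congr (_ * (_ + _)).
  rewrite -big_split; apply: eq_bigr => i _ /=.
  have h1 := one_sub_neq0 _ (hx i); have h2 := one_add_neq0 _ (hx i).
  have h3 : 1 - x i * x i != 0 by apply: one_sub_neq0; exact: ncM_lt1.
  have h1' : - x i + 1 != 0 by rewrite addrC.
  have h2' : x i + 1 != 0 by rewrite addrC.
  by field; rewrite ?h1 ?h2 ?h3 ?h1' ?h2'.
rewrite -big_split; apply: eq_bigr => i _ /=.
have h1 := one_sub_neq0 _ (hx i); have h2 := one_add_neq0 _ (hx i).
have h3 : 1 - x i * x i != 0 by apply: one_sub_neq0; exact: ncM_lt1.
have h1' : - x i + 1 != 0 by rewrite addrC.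
have h2' : x i + 1 != 0 by rewrite addrC.
by rewrite opprK; field; rewrite ?h1 ?h2 ?h3 ?h1' ?h2'.
Qed.

End S2.

Section S3.
Context {R : realType}.
Implicit Types (a b s z w : R[i]).
Lemma toC (f : nat -> R[i]) (l : R[i]) :
  (f : nat -> (R[i])^o) n @[n --> \oo] --> (l : (R[i])^o) -> f n @[n --> \oo] --> l.
Proof. exact. Qed.

Lemma x_bound p (th : R) s : prime p -> 0 < th -> th <= complex.Re s ->
  nc ((ppow p s)^-1) <= expR (- (th * ln (p%:R : R))).
Proof.
move=> pp th0 hs; rewrite ncV nc_ppow -expRN ler_expR lerN2.
apply: ler_wpM2r => //; apply: ln_ge0; rewrite ler1n; exact: prime_gt0.
Qed.

Lemma t_lt1 p (th : R) : prime p -> 0 < th -> expR (- (th * ln (p%:R : R))) < 1.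
Proof.
move=> pp th0; rewrite expR_lt1 oppr_lt0; apply: mulr_gt0 => //.
by apply: ln_gt0; rewrite ltr1n; exact: prime_gt1.
Qed.

Lemma part1 : forall (k p : nat) (theta : R) (u : 'I_(2 * k) -> R[i]),
     (1 <= k)%N -> prime p -> 0 < theta ->
     (forall i, theta <= complex.Re (u i)) ->
     B_partial p u 0 N @[N --> \oo] -->
       (\prod_(i < 2 * k) \prod_(j < 2 * k | (i <= j)%N)
           (1 - (ppow p (u i + u j))^-1)^-1) * C_factor p u.
Proof.
move=> k p th u _ pp th0 hu.
have hx : forall i, nc ((fun i => (ppow p (u i))^-1) i) < 1.
  by move=> i /=; exact: le_lt_trans (x_bound _ _ _ pp th0 (hu i)) (t_lt1 _ _ pp th0).
have Lq := @limit_eq R _ (fun i => (ppow p (u i))^-1) hx; rewrite /= in Lq.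
rewrite /C_factor.
under eq_bigr do under eq_bigr do rewrite ppowD invfM.
under [X in _ * (X * _)]eq_bigr do under eq_bigr do rewrite ppowD invfM.
rewrite -Lq.
apply: toC.
have E : (fun N => B_partial p u 0 N) = fun N => 2^-1 * (\prod_i \sum_(m < N) ((ppow p (u i))^-1)^+m
                            + \prod_i \sum_(m < N) (- (ppow p (u i))^-1)^+m).
  by apply: funext => N; rewrite B_partial_eq.
rewrite E.
have h1 : ((fun N => \prod_i \sum_(m < N) ((ppow p (u i))^-1)^+m : R[i]^o)
          + (fun N => \prod_i \sum_(m < N) (- (ppow p (u i))^-1)^+m : R[i]^o)) n
          @[n --> \oo] --> (\prod_i (1 - (ppow p (u i))^-1)^-1
                             + \prod_i (1 - - (ppow p (u i))^-1)^-1 : R[i]^o).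
  apply: cvgD; apply: cvg_bigprod => i; apply: cvg_geom => //.
  by rewrite ncN.
exact: (cvgMl_tmp (a := 2^-1) h1).
Qed.

End S3.

Section S4.
Context {R : realType}.
Implicit Types (a b s z w : R[i]).
Lemma ncB z w : nc (z - w) <= nc z + nc w.
Proof. by rewrite -(ncN w) ncD. Qed.

Lemma sum_bound (I : Type) (r : seq I) (P : pred I) (F : I -> R[i]) (c : R) :
  0 <= c -> (forall i, P i -> nc (F i) <= c) ->
  nc (\sum_(i <- r | P i) F i) <= (size r)%:R * c.
Proof.
move=> c0 hF; elim: r => [|a r IH]; first by rewrite big_nil /nc normr0 mul0r.
rewrite big_cons /= -natr1 mulrDl mul1r; case: ifP => Pa.
  by apply: le_trans (ncD _ _) _; rewrite addrC lerD // hF.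
by apply: le_trans IH _; rewrite lerDl.
Qed.

Lemma prod_bound (I : Type) (r : seq I) (P : pred I) (z : I -> R[i]) (s : R) :
  0 <= s -> s <= 1 -> (forall q, P q -> nc (z q) <= s) ->
  [/\ nc (\prod_(q <- r | P q) (1 - z q)) <= (2 ^ size r)%:R,
      nc (\prod_(q <- r | P q) (1 - z q) - 1) <= (size r * 2 ^ size r)%:R * s &
      nc (\prod_(q <- r | P q) (1 - z q) - 1 + \sum_(q <- r | P q) z q)
         <= ((size r) ^ 2 * 2 ^ size r)%:R * s ^+ 2].
Proof.
move=> s0 s1 hz; elim: r => [|a r [h1 h2 h3]].
  rewrite !big_nil /= subrr addr0 nc1 /nc normr0 !mul0r; split => //.
rewrite !big_cons /=.
set Pr := \prod_(j <- r | P j) (1 - z j) in h1 h2 h3 *.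
set S := \sum_(j <- r | P j) z j in h3 *.
set m := size r in h1 h2 h3 *.
rewrite !natrM !natrX in h1 h2 h3.
have E1 : ((2 ^ m.+1)%:R : R) = 2 * 2 ^+ m by rewrite expnS natrM natrX.
have E2 : ((m.+1 * 2 ^ m.+1)%:R : R) = (m%:R + 1) * (2 * 2 ^+ m).
  by rewrite natrM E1 -[(m.+1)%:R]natr1.
have E3 : ((m.+1 ^ 2 * 2 ^ m.+1)%:R : R) = (m%:R + 1) * (m%:R + 1) * (2 * 2 ^+ m).
  by rewrite natrM E1 natrX -[(m.+1)%:R]natr1 expr2.
rewrite E1 E2 E3.
have a0 : 0 <= (2 : R) ^+ m by rewrite exprn_ge0.
have m0 : 0 <= (m%:R : R) by [].
have A0 := nc_ge0 Pr; have B0 := nc_ge0 (Pr - 1); have C0 := nc_ge0 (Pr - 1 + S).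
have as0 : 0 <= 2 ^+ m * s by rewrite mulr_ge0.
have mas0 : 0 <= m%:R * (2 ^+ m * s) by rewrite mulr_ge0.
have as20 : 0 <= 2 ^+ m * (s * s) by rewrite !mulr_ge0.
have mas20 : 0 <= m%:R * (2 ^+ m * (s * s)) by rewrite !mulr_ge0.
have mmas20 : 0 <= m%:R * (m%:R * (2 ^+ m * (s * s))) by rewrite !mulr_ge0.
rewrite !expr2 in h3 *.
case: ifP => Pa; last first.
  split; nra.
have zb := hz a Pa; have z0 := nc_ge0 (z a).
have hb : nc (1 - z a) <= 2.
  by apply: le_trans (ncB _ _) _; rewrite nc1; lra.
have hb0 := nc_ge0 (1 - z a).
split.
- rewrite ncM; nra.
- have -> : (1 - z a) * Pr - 1 = (Pr - 1) - z a * Pr by ring.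
  apply: le_trans (ncB _ _) _; rewrite ncM.
  have : nc (z a) * nc Pr <= s * 2 ^+ m by apply: ler_pM.
  nra.
- have -> : (1 - z a) * Pr - 1 + (z a + S) = (Pr - 1 + S) - z a * (Pr - 1) by ring.
  apply: le_trans (ncB _ _) _; rewrite ncM.
  have : nc (z a) * nc (Pr - 1) <= s * (m%:R * 2 ^+ m * s) by apply: ler_pM.
  nra.
Qed.

End S4.

Section S5.
Context {R : realType}.
Implicit Types (a b s z w : R[i]).
Lemma sigma_eq n (x : 'I_n -> R[i]) :
  \sum_(A : {set 'I_n} | #|A| == 2%N) \prod_(i in A) x i =
  \sum_(q : 'I_n * 'I_n | (q.1 < q.2)%N) x q.1 * x q.2.
Proof.
pose Qs := [set q : 'I_n * 'I_n | (q.1 < q.2)%N]%SET.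
have f : forall (y w v : 'I_n), y \in [set w; v]%SET -> (y : nat) = w \/ (y : nat) = v.
  by move=> y w v; rewrite !inE => /orP[]/eqP->; [left|right].
have inj : {in Qs &, injective (fun q : 'I_n * 'I_n => [set q.1; q.2]%SET)}.
  move=> [a b] [c d]; rewrite !inE /= => hab hcd E.
  have Ha : a \in [set c; d]%SET by rewrite -E !inE eqxx.
  have Hb : b \in [set c; d]%SET by rewrite -E !inE eqxx orbT.
  have Hc : c \in [set a; b]%SET by rewrite E !inE eqxx.
  have Hd : d \in [set a; b]%SET by rewrite E !inE eqxx orbT.
  suff [e1 e2] : (a : nat) = c /\ (b : nat) = d by rewrite (ord_inj e1) (ord_inj e2).
  move: (f _ _ _ Ha) (f _ _ _ Hb) (f _ _ _ Hc) (f _ _ _ Hd) hab hcd; lia.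
have im : [set [set q.1; q.2]%SET | q in Qs]%SET = [set A : {set 'I_n} | #|A| == 2%N]%SET.
  apply/setP => A; rewrite inE; apply/imsetP/idP.
    case=> [[a b]]; rewrite inE /= => hab ->; rewrite cards2.
    suff -> : (a != b) by [].
    by apply/eqP => e; move: hab; rewrite e ltnn.
  move/cards2P => [a [b [nab ->]]].
  case: (ltngtP a b) => h.
  - by exists (a, b); rewrite ?inE.
  - by exists (b, a); rewrite ?inE //= finset.setUC.
  - by move: nab; rewrite (ord_inj h) eqxx.
rewrite (eq_bigl (fun A => A \in [set A : {set 'I_n} | #|A| == 2%N]%SET)); last first.
  by move=> A; rewrite inE.
rewrite -im big_imset //=.
apply: eq_big => q; first by rewrite inE.
rewrite inE => hq.
rewrite big_setU1 ?big_set1 //= inE.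
by apply/eqP => e; move: hq; rewrite e ltnn.
Qed.

Lemma E_split n (x : 'I_n -> R[i]) :
  \sum_(A : {set 'I_n} | ~~ odd #|A|) \prod_(i in A) x i =
  1 + \sum_(A : {set 'I_n} | #|A| == 2%N) \prod_(i in A) x i
    + \sum_(A : {set 'I_n} | ~~ odd #|A| && ~~ (#|A| <= 2)%N) \prod_(i in A) x i.
Proof.
rewrite (bigID (fun A : {set 'I_n} => (#|A| <= 2)%N)) /=; congr (_ + _).
rewrite (bigID (fun A : {set 'I_n} => #|A| == 0%N)) /=; congr (_ + _).
  transitivity (\sum_(A : {set 'I_n} | A == finset.set0) \prod_(i in A) x i).
    apply: eq_bigl => A /=; rewrite -cards_eq0; by case: #|A| => [|[|[|c]]] //=; rewrite ?andbF.
  by rewrite big_pred1_eq big_set0.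
by apply: eq_bigl => A; case: #|A| => [|[|[|c]]] //=; rewrite ?andbF.
Qed.

End S5.

Section S6.
Context {R : realType}.
Implicit Types (a b s z w : R[i]).
Definition Kc (n : nat) : R :=
  let c2 := size (index_enum ('I_n * 'I_n)%type) in
  let c4 := size (index_enum {set 'I_n}) in
  ((c4 * (1 + c2) + c2 ^ 2 + c2 ^ 2 * 2 ^ c2 * c4)%N)%:R.

Lemma term_bound n (x : 'I_n -> R[i]) (t : R) (A : {set 'I_n}) :
  0 <= t -> (forall i, nc (x i) <= t) -> nc (\prod_(i in A) x i) <= t ^+ #|A|.
Proof.
move=> t0 hx; rewrite nc_prod -prodr_const; apply: ler_prod => i _.
by rewrite nc_ge0 hx.
Qed.

Lemma part2_core n (x : 'I_n -> R[i]) (t : R) : 0 <= t -> t <= 1 ->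
  (forall i, nc (x i) <= t) ->
  nc ((\prod_(i < n) \prod_(j < n | (i < j)%N) (1 - x i * x j)) *
      \sum_(A : {set 'I_n} | ~~ odd #|A|) \prod_(i in A) x i - 1) <= Kc n * t ^+ 4.
Proof.
move=> t0 t1 hx.
set D := \prod_i _.
set sig := \sum_(q : 'I_n * 'I_n | (q.1 < q.2)%N) x q.1 * x q.2.
set rho := \sum_(A : {set 'I_n} | ~~ odd #|A| && ~~ (#|A| <= 2)%N) \prod_(i in A) x i.
set E := \sum_(A : {set 'I_n} | ~~ odd #|A|) _.
have hE : E = 1 + sig + rho by rewrite /E E_split sigma_eq.
have hD : D = \prod_(q : 'I_n * 'I_n | (q.1 < q.2)%N) (1 - x q.1 * x q.2).
  by rewrite /D pair_big_dep.
have hxx : forall q : 'I_n * 'I_n, (q.1 < q.2)%N -> nc (x q.1 * x q.2) <= t ^+ 2.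
  by move=> q _; rewrite ncM expr2; apply: ler_pM; rewrite ?nc_ge0.
have t20 : 0 <= t ^+ 2 by rewrite exprn_ge0.
have t21 : t ^+ 2 <= 1 by rewrite exprn_ile1.
have [_ _ h3] := @prod_bound R ('I_n * 'I_n)%type (index_enum ('I_n * 'I_n)%type)
   (fun q => (q.1 < q.2)%N) (fun q => x q.1 * x q.2) _ t20 t21 hxx.
rewrite -hD -/sig in h3.
set c2 := size (index_enum ('I_n * 'I_n)%type) in h3 *.
set c4 := size (index_enum {set 'I_n}).
set r := D - 1 + sig in h3 *.
have key : D * E - 1 = rho * (1 - sig) - sig * sig + r * E.
  by rewrite /r hE; ring.
have t4 : t ^+ 4 = t ^+ 2 * t ^+ 2 by rewrite -exprD.
have hrho : nc rho <= c4%:R * t ^+ 4.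
  apply: sum_bound; first by rewrite exprn_ge0.
  move=> A /andP[hA1 hA2]; apply: le_trans (term_bound _ _ _ A t0 hx) _.
  apply: ler_wiXn2l => //; move: hA1 hA2; case: #|A| => [|[|[|[|c]]]] //.
have hsig : nc sig <= c2%:R * t ^+ 2 by apply: sum_bound.
have hEb : nc E <= c4%:R * 1.
  rewrite /E; apply: sum_bound => // A _.
  apply: le_trans (term_bound _ _ _ A t0 hx) _; exact: exprn_ile1.
have hr : nc r <= (c2 ^ 2 * 2 ^ c2)%:R * t ^+ 4 by rewrite t4 -expr2.
rewrite key.
have r0 := nc_ge0 rho; have s0 := nc_ge0 sig; have rr0 := nc_ge0 r; have e0 := nc_ge0 E.
have c20 : 0 <= (c2%:R : R) by [].
have h1s : nc (1 - sig) <= 1 + c2%:R.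
  apply: le_trans (ncB _ _) _; rewrite nc1 lerD2l; apply: le_trans hsig _.
  nra.
have b1 : nc rho * nc (1 - sig) <= c4%:R * t ^+ 4 * (1 + c2%:R).
  by apply: ler_pM => //; exact: nc_ge0.
have b2 : nc sig * nc sig <= c2%:R * c2%:R * t ^+ 4.
  have := ler_pM s0 s0 hsig hsig; rewrite t4.
  by have -> : c2%:R * t ^+ 2 * (c2%:R * t ^+ 2) = c2%:R * c2%:R * (t ^+ 2 * t ^+ 2) by ring.
have b3 : nc r * nc E <= (c2 ^ 2 * 2 ^ c2)%:R * t ^+ 4 * c4%:R.
  by apply: ler_pM => //; rewrite mulr1 in hEb.
apply: le_trans (ncD _ _) _; apply: le_trans (lerD (ncB _ _) (lexx _)) _.
rewrite !ncM.
have -> : Kc n * t ^+ 4 = c4%:R * t ^+ 4 * (1 + c2%:R) + c2%:R * c2%:R * t ^+ 4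
            + (c2 ^ 2 * 2 ^ c2)%:R * t ^+ 4 * c4%:R.
  rewrite /Kc -/c2 -/c4 !natrD !natrM !natrX; ring.
by apply: lerD => //; apply: lerD.
Qed.

End S6.
Lemma part2 (R : realType) : forall (k : nat) (theta : R), (1 <= k)%N -> 0 < theta ->
     exists K : R, forall (p : nat) (u : 'I_(2 * k) -> R[i]),
       prime p -> (forall i, theta <= complex.Re (u i)) ->
       `|C_factor p u - 1| <= (Complex K 0) * (ppow p (Complex (4 * theta) 0))^-1.
Proof.
move=> k th _ th0; exists (@Kc R (2 * k)) => p u pp hu.
set t := expR (- (th * ln (p%:R : R))).
have hx : forall i, nc ((fun i => (ppow p (u i))^-1) i) <= t.
  by move=> i /=; apply: x_bound.
have core := @part2_core R _ (fun i => (ppow p (u i))^-1) t (expR_ge0 _) (ltW (t_lt1 _ _ pp th0)) hx.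
rewrite /= in core.
have -> : (ppow p (Complex (4 * th) 0))^-1 = (t ^+ 4)%:C.
  rewrite /ppow /= mul0r cos0 sin0 mulr1 mulr0 complexr0 -fmorphV.
  congr (_ %:C); rewrite /t -expRM_natl -expRN; congr expR.
  by rewrite mulrN mulrA.
rewrite ncE complexr0 -rmorphM lecR.
rewrite /C_factor.
under eq_bigr do under eq_bigr do rewrite ppowD invfM.
exact: core.
Qed.

Local Close Scope complex_scope.

Theorem lemmaA2 (R : realType) :
  (forall (k p : nat) (theta : R) (u : 'I_(2 * k) -> R[i]),
     (1 <= k)%N -> prime p -> 0 < theta ->
     (forall i, theta <= complex.Re (u i)) ->
     B_partial p u 0 N @[N --> \oo] -->
       (\prod_(i < 2 * k) \prod_(j < 2 * k | (i <= j)%N)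
           (1 - (ppow p (u i + u j))^-1)^-1) * C_factor p u)
  /\
  (forall (k : nat) (theta : R), (1 <= k)%N -> 0 < theta ->
     exists K : R, forall (p : nat) (u : 'I_(2 * k) -> R[i]),
       prime p -> (forall i, theta <= complex.Re (u i)) ->
       `|C_factor p u - 1| <= (Complex K 0) * (ppow p (Complex (4 * theta) 0))^-1).
Proof. split; [exact: part1 | exact: part2]. Qed.
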